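(* Let $n\ge2$ and, for $\mathbf w,\mathbf w'\in\mathcal{W}^n$ and $1\le j\le n-1$, let $\mathscr M_j(\mathbf w,\mathbf w')$ be the probability that a single Moran event transforms $\mathbf w$ into $\mathbf w'$ and that the dying leaf $u$ is a child of the internal node of rank $j$ in $\mathbf w$. Then $\mathscr M(\mathbf w,\mathbf w')=\sum_{j=1}^{n-1}\mathscr M_j(\mathbf w,\mathbf w')$, and for all $\mathbf w,\mathbf w'\in\mathcal W^n$ and $j$, \[ \sum_{\mathbf w\in\mathcal W^n}\mathscr M_j(\mathbf w,\mathbf w')=\frac{j}{\binom n2},\qquad \sum_{\mathbf w'\in\mathcal W^n}\mathscr M_j(\mathbf w,\mathbf w')=\frac{B_j(\mathbf w)}{n}, \] where $B_j(\mathbf w)$ is the number of leaves among the two children of the rank-$j$ internal node of $\mathbf w$.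
   Context: $\mathcal W^n$ is the set of ranked leaf-labelled rooted binary tree topologies with leaves $\{1,\dots,n\}$: binary trees with $n-1$ internal nodes totally ordered by rank $1,\dots,n-1$ (rank 1 is the root; each internal node has larger rank than its parent). A Moran event on $\mathbf w\in\mathcal W^n$: an ordered pair $(u,v)$ of distinct leaves is chosen uniformly at random among the $n(n-1)$ ordered pairs; leaf $u$ and its parent internal node are removed (the sibling of $u$ is reattached to the parent of the removed node, ranks of later nodes shifting down by one), and then a new internal node of rank $n-1$ is inserted on the edge above leaf $v$, with children $u$ and $v$. $\mathscr M(\mathbf w,\mathbf w')$ is the probability that a Moran event transforms $\mathbf w$ into $\mathbf w'$. *)

(* Defs.v *)
From mathcomp Require Import all_boot all_order all_algebra.
Set Implicit Arguments. Unset Strict Implicit. Unset Printing Implicit Defensive.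
Import GRing.Theory Num.Theory.

(* Nodes of a tree in W^n: leaves  inl l  (l : 'I_n, leaf label l+1) and
   internal nodes  inr k  (k : 'I_n.-1, internal node of rank k+1). *)
Definition node (n : nat) := ('I_n + 'I_n.-1)%type.

(* A ranked tree topology is encoded by its parent map (None for the root). *)
Definition wf_tree (n : nat) (f : {ffun node n -> option 'I_n.-1}) : bool :=
  [forall x : node n, (f x == None) ==
      (match x with inr i => val i == 0 | inl _ => false end)] &&
  [forall x : 'I_n.-1, forall y : 'I_n.-1, (f (inr y) == Some x) ==> (x < y)] &&
  [forall p : 'I_n.-1, #|[pred x : node n | f x == Some p]| == 2].

Definition W (n : nat) := {f : {ffun node n -> option 'I_n.-1} | wf_tree f}.

Definition par (n : nat) (w : W n) (x : node n) : option 'I_n.-1 := val w x.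

Definition parI (n : nat) (w : W n) (r : nat) : option nat :=
  oapp (fun k : 'I_n.-1 => omap val (par w (inr k))) None (insub r : option 'I_n.-1).

(* Result (as parent map with nat ranks, 0-indexed) of the Moran event in which
   leaf u dies and leaf v reproduces.  New internal node has rank n-1
   (0-indexed n-2). *)
Definition moran_raw (n : nat) (w : W n) (u v : 'I_n) : node n -> option nat :=
  match par w (inl u) with
  | None => fun _ => None
  | Some p =>
    let shift r := if r < val p then r else r.-1 in
    (* parent after removal of u and p, old node given by its old parent *)
    let reparent (op : option nat) :=
      omap shift (if op == Some (val p) then parI w (val p) else op) in
    fun y => match y with
    | inl l => if (l == u) || (l == v) then Some n.-2
               else reparent (omap val (par w (inl l)))
    | inr k => if val k == n.-2 then reparent (omap val (par w (inl v)))
               else reparent (parI w (if val k < val p then val k else (val k).+1))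
    end
  end.

Definition moran_pairs (n : nat) (w w' : W n) : {set 'I_n * 'I_n} :=
  [set uv : 'I_n * 'I_n | (uv.1 != uv.2) &&
     [forall x : node n, moran_raw w uv.1 uv.2 x == omap val (par w' x)]].

Definition Moran (n : nat) (w w' : W n) : rat :=
  (#|moran_pairs w w'|)%:R / (n * (n - 1))%:R.

(* j : 'I_n.-1 denotes the internal node of rank j+1 *)
Definition Moran_j (n : nat) (j : 'I_n.-1) (w w' : W n) : rat :=
  (#|[set uv in moran_pairs w w' | par w (inl uv.1) == Some j]|)%:R
    / (n * (n - 1))%:R.

Definition B (n : nat) (j : 'I_n.-1) (w : W n) : nat :=
  #|[set l : 'I_n | par w (inl l) == Some j]|.

(* Main.v *)
Require Import Defs.
From mathcomp Require Import all_boot all_order all_algebra.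
From mathcomp Require Import zify.
Set Implicit Arguments. Unset Strict Implicit. Unset Printing Implicit Defensive.

Section Basics.
Variable m : nat.
Local Notation N := m.+2.
Implicit Types (w : W N) (x y : node N).

Definition P w x : option nat := omap val (par w x).

Lemma wfW w : wf_tree (val w). Proof. exact: valP w. Qed.

Lemma P_None w x : (P w x == None) = (x == inr ord0).
Proof.
case/andP: (wfW w) => /andP [/forallP H1 _] _.
have := H1 x; rewrite /P /par; case: x => [l|i] /=; case: (val w _) => [a|] //=.
move/eqP => H; apply/esym/negbTE; apply/eqP => -[E]; move: H; rewrite E.
by [].
Qed.

Lemma P_lt w (k : 'I_m.+1) r : P w (inr k) = Some r -> r < k.
Proof.
case/andP: (wfW w) => /andP [_ /forallP H2] _.
rewrite /P /par; case E: (val w (inr k)) => [a|] //= [<-].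
by have /forallP/(_ k)/implyP := H2 a; apply; rewrite E.
Qed.

Lemma P_le w x r : P w x = Some r -> r <= m.
Proof. by rewrite /P; case: (par w x) => [a|] //= [<-]; rewrite -ltnS. Qed.

Lemma P_Some w x (q : 'I_m.+1) : (P w x == Some ((q : nat))) = (par w x == Some q).
Proof.
by rewrite /P; case: (par w x) => [a|] //=; apply/eqP/eqP => [[/val_inj ->]|[->]].
Qed.

Lemma P_children w (q : 'I_m.+1) : exists c1 c2, [/\ c1 != c2, P w c1 = Some ((q : nat)),
   P w c2 = Some ((q : nat)) & forall x, P w x = Some ((q : nat)) -> x = c1 \/ x = c2].
Proof.
case/andP: (wfW w) => _ /forallP /(_ q) H.
have : #|[set x | par w x == Some q]| == 2 by rewrite cardsE.
case/cards2P => c1 [c2 [Hne Hs]].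
exists c1, c2; split => //.
- apply/eqP; rewrite P_Some; suff : c1 \in [set x | par w x == Some q] by rewrite inE.
  by rewrite Hs !inE eqxx.
- apply/eqP; rewrite P_Some; suff : c2 \in [set x | par w x == Some q] by rewrite inE.
  by rewrite Hs !inE eqxx orbT.
- move=> x /eqP; rewrite P_Some => Hx.
  have : x \in [set x | par w x == Some q] by rewrite inE.
  by rewrite Hs !inE => /orP [] /eqP; auto.
Qed.

Lemma P_inj w1 w2 : P w1 =1 P w2 -> w1 = w2.
Proof.
move=> H; apply: val_inj; apply/ffunP => x; have := H x.
rewrite /P /par; case: (val w1 x) => [a|]; case: (val w2 x) => [b|] //=.
by case => /val_inj ->.
Qed.


Lemma parIE w r : r < m.+1 -> parI w r = P w (inr (inord r)).
Proof.
move=> Hr; rewrite /parI insubT /=.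
by rewrite /P; congr (omap _ (par _ (inr _))); apply: val_inj; rewrite /= inordK.
Qed.

Definition o (p : nat) (x : node N) : node N :=
  match x with inl l => inl l | inr k => inr (inord (if (k : nat) < p then (k : nat) else ((k : nat)).-1)) end.
Definition nu (v : 'I_N) (p : nat) x : node N := if x == inl v then inr ord_max else o p x.
Definition sh (p r : nat) := if r < p then r else r.-1.
Definition unsh (p r : nat) := if r < p then r else r.+1.
Definition repf w (p : 'I_m.+1) (op : option nat) :=
  omap (sh p) (if op == Some ((p : nat)) then P w (inr p) else op).

Section MoranSec.
Variables (w : W N) (u v : 'I_N) (p : 'I_m.+1).
Hypothesis uv : u != v.
Hypothesis hp : par w (inl u) = Some p.

Local Notation T' := (moran_raw w u v).
Local Notation rep := (repf w p).

Lemma moranE y : T' y = match y with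
  | inl l => if (l == u) || (l == v) then Some m else rep (P w (inl l))
  | inr k => if (k : nat) == m then rep (P w (inl v))
             else rep (P w (inr (inord (if (k : nat) < p then (k : nat) else ((k : nat)).+1))))
  end.
Proof.
have E1 : parI w p = P w (inr p) by rewrite parIE // inord_val.
rewrite /moran_raw hp /= E1; case: y => [l|k]; first by [].
case: eqP => // Hk; rewrite parIE //.
have Hk' := ltn_ord k.
case: ifP => H; simpl in *; lia.
Qed.


Lemma Pu : P w (inl u) = Some ((p : nat)). Proof. by rewrite /P hp. Qed.

Lemma rep_Sp : rep (Some ((p : nat))) = P w (inr p).
Proof.
rewrite /rep eqxx; case E: (P w (inr p)) => [r|] //=.
by rewrite /sh (P_lt E).
Qed.

Lemma rep_ne x r : P w x = Some r -> r != p -> rep (P w x) = Some (sh p r).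
Proof.
move=> E H; rewrite /rep E; case: eqP => [[Hr]|] //.
by rewrite Hr eqxx in H.
Qed.

Lemma rep_lt x r : rep (P w x) = Some r -> r < m.
Proof.
have Hp := ltn_ord p.
rewrite /rep; case E: (P w x) => [a|] //=; case: eqP => [[Ha]|Ha].
- case E2: (P w (inr p)) => [b|] //= [<-]; have := P_lt E2; rewrite /sh.
  case: ifP => ? ?; simpl in *; lia.
- move=> [<-]; have := P_le E; rewrite /sh.
  have Ha' : a <> p by move=> H; apply: Ha; rewrite H.
  case: ifP => ? ?; simpl in *; lia.
Qed.

Lemma moran_nu x : x != inl u -> x != inr p -> T' (nu v p x) = rep (P w x).
Proof.
case: x => [l|k] Hu Hp.
- rewrite /nu; case: (eqVneq (inl l) (inl v :> node N)) => [[->]|Hl].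
    by rewrite moranE /= eqxx.
  rewrite moranE /=.
  have -> : (l == u) = false by apply/negbTE; apply: contra Hu => /eqP ->.
  have -> : (l == v) = false by apply/negbTE; apply: contra Hl => /eqP ->.
  by [].
- rewrite /nu /= moranE.
  have Hk := ltn_ord k; have Hpp := ltn_ord p.
  have Hkp : (k : nat) <> (p : nat) by move=> E; move/eqP: Hp; apply; congr inr; apply: val_inj.
  simpl in *.
  have Hb : (if k < p then (k : nat) else ((k : nat)).-1) < m.+1 by case: ifP => ?; lia.
  rewrite inordK //.
  have -> : ((if k < p then (k : nat) else ((k : nat)).-1) == m) = false by apply/negbTE/eqP; case: ifP => ?; lia.
  congr (rep (P w (inr _))); apply: val_inj => /=; rewrite inordK; case: (ltnP k p) => H /=; try (case: ifP => ? /=); lia.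
Qed.

End MoranSec.

Lemma o_inj (p : 'I_m.+1) x y : x != inr p -> y != inr p -> o p x = o p y -> x = y.
Proof.
case: x => [a|a]; case: y => [b|b] Ha Hb /= E; try discriminate.
- by case: E => ->.
- have Hpa : (a : nat) <> (p : nat) by move=> E'; move/eqP: Ha; apply; congr inr; apply: val_inj.
  have Hpb : (b : nat) <> (p : nat) by move=> E'; move/eqP: Hb; apply; congr inr; apply: val_inj.
  have := ltn_ord a; have := ltn_ord b; have := ltn_ord p; simpl in *.
  move=> H1 H2 H3; case: E => /(congr1 val); rewrite /= !inordK; try (case: ifP => ?; lia).
  move=> E; congr inr; apply: val_inj => /=; move: E; do 2 case: ifP => ?; lia.
Qed.

Lemma o_max (p : 'I_m.+1) x : x != inr p -> o p x != inr ord_max.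
Proof.
case: x => [a|a] //= Ha; apply/eqP => -[] /(congr1 val) /=.
have Hpa : (a : nat) <> (p : nat) by move=> E; move/eqP: Ha; apply; congr inr; apply: val_inj.
have := ltn_ord a; have := ltn_ord p; simpl in *.
move=> H1 H2; rewrite inordK; case: ifP => ?; lia.
Qed.

Lemma nu_inj v (p : 'I_m.+1) x y : x != inr p -> y != inr p -> nu v p x = nu v p y -> x = y.
Proof.
move=> Hx Hy; rewrite /nu.
case: eqP => [->|Hxv]; case: eqP => [->|Hyv] //.
- by move=> E; have := o_max Hy; rewrite -E eqxx.
- by move=> E; have := o_max Hx; rewrite E eqxx.
- exact: o_inj.
Qed.


End Basics.

Section MoranWF.
Variable m : nat.
Local Notation N := m.+2.
Variables (w : W N) (u v : 'I_N) (p : 'I_m.+1).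
Hypothesis uv : u != v.
Hypothesis hp : par w (inl u) = Some p.
Variable s : node N.
Hypothesis hs1 : s != inl u.
Hypothesis hs2 : P w s = Some (p : nat).
Hypothesis hs3 : forall x, P w x = Some (p : nat) -> x = inl u \/ x = s.

Local Notation T' := (moran_raw w u v).
Local Notation rep := (repf w p).

Lemma s_ne_p : s != inr p.
Proof. by apply/eqP => E; have := P_lt (etrans (congr1 (P w) (esym E)) hs2); rewrite ltnn. Qed.

Lemma sib_root : (p : nat) = 0 -> 0 < m -> s = inr (inord 1).
Proof.
move=> p0 m0.
have H1 : P w (inr (inord 1)) = Some (p : nat).
  case E: (P w (inr (inord 1))) => [r|].
  - by have := P_lt E; rewrite inordK // p0; case: r {E}.
  - move/eqP: E; rewrite P_None => /eqP [] /(congr1 val); rewrite /= inordK //.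
by case: (hs3 H1).
Qed.
Lemma T'_le y r : T' y = Some r -> r <= m.
Proof.
rewrite (moranE uv hp); case: y => [l|k].
- by case: ifP => _; [case=> <- | move/(rep_lt uv); exact: ltnW].
- by case: ifP => _ /(rep_lt uv) /ltnW.
Qed.

Lemma T'_lt (k : 'I_m.+1) r : T' (inr k) = Some r -> r < k.
Proof.
rewrite (moranE uv hp) /=; have Hk := ltn_ord k; have Hp := ltn_ord p.
case: eqP => Hkm.
  by move/(rep_lt uv); simpl in *; lia.
have Hok : (if k < p then (k : nat) else (k : nat).+1) < m.+1 by case: ifP => ?; simpl in *; lia.
set ok := inord _.
have Vok : (ok : nat) = (if k < p then (k : nat) else (k : nat).+1) by rewrite /ok inordK.
rewrite /repf; case E: (P _ _) => [a|] //=.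
have Ha := P_lt E; rewrite Vok in Ha.
case: (eqVneq a p) => [Hap|Hap].
- rewrite Hap eqxx; case E2: (P w (inr p)) => [b|] //= [<-].
  have := P_lt E2; rewrite Hap /sh in Ha *.
  by move: Ha; case: (ltnP k p) => ? /=; case: ifP => ? ? ; simpl in *; lia.
- have -> : (Some a == Some (p : nat)) = false by apply/negbTE; apply: contra Hap => /eqP [->].
  move=> [<-]; rewrite /sh.
  have Hap' : a <> p by move/eqP; rewrite (negbTE Hap).
  by move: Ha; case: (ltnP k p) => ? /=; case: ifP => ? ?; simpl in *; lia.
Qed.

Lemma inr_eq0 (k : 'I_m.+1) : (inr k == inr ord0 :> node N) = ((k : nat) == 0).
Proof. by apply/eqP/eqP => [[->]|H] //; congr inr; apply: val_inj. Qed.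

Lemma p_ne0 b : P w (inr p) = Some b -> (p : nat) <> 0.
Proof. move=> E p0; have : (P w (inr p) == None) by rewrite P_None inr_eq0 p0.
by rewrite E. Qed.

Lemma P_root0 : P w (inr p) = None -> (p : nat) = 0.
Proof. by move/eqP; rewrite P_None inr_eq0 => /eqP. Qed.

Ltac fin0 := intros; rewrite /=; match goal with |- _ = (?x == 0) => case: (eqVneq x 0) => ?; (try by []); exfalso; simpl in *; lia end.

Lemma T'_None y : (T' y == None) = (y == inr ord0).
Proof.
have Hp := ltn_ord p.
rewrite (moranE uv hp); case: y => [l|k].
- case: ifP => Hl //=.
  rewrite /repf; case E: (P w (inl l)) => [a|]; last by move/eqP: E; rewrite P_None.
  case: (eqVneq a p) => [Hap|Hap].
  + rewrite Hap eqxx; case E2: (P w (inr p)) => [b|] //=.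
    have p0 := P_root0 E2.
    have Hls : inl l = s.
      case: (hs3 (x := inl l)); first by rewrite E Hap.
        by move=> [] Hlu; rewrite Hlu eqxx in Hl.
      by [].
    case: (posnP m) => [m0|m0]; last by rewrite (sib_root p0 m0) in Hls.
    exfalso; move/norP: Hl => [/eqP Hlu /eqP Hlv].
    have Hlu' : (l : nat) <> u by move/val_inj.
    have Hlv' : (l : nat) <> v by move/val_inj.
    have Huv' : (u : nat) <> v by move/val_inj/eqP; rewrite (negbTE uv).
    have := ltn_ord l; have := ltn_ord u; have := ltn_ord v; move=> H1 H2 H3; have H4 : (l : nat) < 2 by rewrite -m0. have H5 : (u : nat) < 2 by rewrite -m0. have H6 : (v : nat) < 2 by rewrite -m0. lia.
  + have -> : (Some a == Some (p : nat)) = false by apply/negbTE; apply: contra Hap => /eqP [->].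
    by [].
- rewrite inr_eq0; have Hk := ltn_ord k.
  case: ifP => /eqP Hkm; simpl in *.
  + rewrite /repf; case E: (P w (inl v)) => [a|]; last by move/eqP: E; rewrite P_None.
    case: (eqVneq a p) => [Hap|Hap].
    * rewrite Hap eqxx; case E2: (P w (inr p)) => [b|] /=.
      - have := p_ne0 E2; fin0.
      - have p0 := P_root0 E2.
        have Hvs : inl v = s.
          case: (hs3 (x := inl v)); first by rewrite E Hap.
            by move=> [] Hvu; move: uv; rewrite Hvu eqxx.
          by [].
        case: (posnP m) => [m0|m0]; last by rewrite (sib_root p0 m0) in Hvs.
        fin0.
    * have -> : (Some a == Some (p : nat)) = false by apply/negbTE; apply: contra Hap => /eqP [->].
      have := P_le E; move/eqP: Hap => Hap.
      move=> Ha; fin0.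
  + have Hok : (if k < p then (k : nat) else (k : nat).+1) < m.+1 by case: ifP => ?; simpl in *; lia.
    set ok := inord _.
    have Vok : (ok : nat) = (if k < p then (k : nat) else (k : nat).+1) by rewrite /ok inordK.
    rewrite /repf; case E: (P _ _) => [a|] /=.
    * have Eok : (ok : nat) <> 0.
        move=> H; have E' := E; rewrite (_ : P _ _ = None) in E' => //.
        by apply/eqP; rewrite P_None inr_eq0 H.
      have Ha := P_lt E.
      case: (eqVneq a p) => [Hap|Hap].
      - rewrite Hap eqxx; case E2: (P w (inr p)) => [b|] /=.
        + have := p_ne0 E2; move: Ha Vok Eok; case: ifP => ? ? ? ? ?; fin0.
        + have p0 := P_root0 E2.
          have Hos : inr ok = s.
            case: (hs3 (x := inr ok)); first by rewrite E Hap.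
              by [].
            by [].
          have m0 : 0 < m by lia.
          rewrite (sib_root p0 m0) in Hos; case: Hos => /(congr1 val); rewrite /= inordK //.
          move: Vok; case: ifP => ? ? ?; fin0.
      - have -> : (Some a == Some (p : nat)) = false by apply/negbTE; apply: contra Hap => /eqP [->].
        move/eqP: Hap => Hap; move: Ha Vok Eok; case: ifP => ? ? ? ?; simpl in *; fin0.
    * move/eqP: E; rewrite P_None inr_eq0 Vok; case: ifP => ? /eqP ?; fin0.
Qed.

Lemma T'_two (q : 'I_m.+1) :
  exists c1 c2, [/\ c1 != c2, T' c1 = Some (q : nat) & T' c2 = Some (q : nat)].
Proof.
have Hq := ltn_ord q; have Hp := ltn_ord p.
case: (eqVneq (q : nat) m) => Hqm.
- exists (inl u), (inl v); split.
  + by apply: contra uv => /eqP [->].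
  + by rewrite (moranE uv hp) eqxx Hqm.
  + by rewrite (moranE uv hp) eqxx orbT Hqm.
- set oq := if (q : nat) < p then (q : nat) else (q : nat).+1.
  have Hqm' : (q : nat) <> m by apply/eqP.
  have Hoq : oq < m.+1 by rewrite /oq; case: ifP => ?; simpl in *; lia.
  have Hoqp : oq != p by rewrite /oq; case: ifP => ?; apply/eqP; simpl in *; lia.
  have Hsh : sh p oq = q by rewrite /sh /oq; case: (ltnP q p) => ? /=; try case: ifP => ? ; simpl in *; lia.
  have [c1 [c2 [Hne H1 H2 _]]] := P_children w (inord oq).
  have Ei : ((inord oq : 'I_m.+1) : nat) = oq by rewrite inordK.
  rewrite Ei in H1 H2.
  pose f c := if c == inr p then s else c.
  have Hf c : P w c = Some oq -> [/\ f c != inl u, f c != inr p & T' (nu v p (f c)) = Some (q : nat)].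
    move=> Hc; rewrite /f; case: (eqVneq c (inr p)) => [Ecp|Ecp] /=.
    - split; [exact: hs1 | exact: s_ne_p | ].
      rewrite (moran_nu uv hp hs1 s_ne_p) hs2 rep_Sp -Ecp Hc.
      have := P_lt (etrans (congr1 (P w) (esym Ecp)) Hc).
      by rewrite /oq; case: ifP => ? ?; simpl in *; try lia; congr Some.
    - have Hcu : c != inl u by apply/eqP => E; move: Hc; rewrite E (Pu hp) => -[] /eqP; rewrite eq_sym (negbTE Hoqp).
      split => //.
      by rewrite (moran_nu uv hp Hcu Ecp) (rep_ne Hc Hoqp) Hsh.
  have [Hf1 Hf2 Hf3] := Hf c1 H1; have [Hg1 Hg2 Hg3] := Hf c2 H2.
  exists (nu v p (f c1)), (nu v p (f c2)); split => //.
  apply/eqP => /(nu_inj Hf2 Hg2); rewrite /f; case: (eqVneq c1 (inr p)) => E1; case: (eqVneq c2 (inr p)) => E2 /=.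
  + by move=> _; move: Hne; rewrite E1 E2 eqxx.
  + by move=> E; move: H2; rewrite -E hs2 => -[] /eqP; rewrite eq_sym (negbTE Hoqp).
  + by move=> E; move: H1; rewrite E hs2 => -[] /eqP; rewrite eq_sym (negbTE Hoqp).
  + by move=> E; move: Hne; rewrite E eqxx.
Qed.

Definition R (w' : W N) (x : node N) : option nat :=
  if x == inl u then Some (p : nat) else if x == s then Some (p : nat)
  else if x == inr p then P w' (nu v p s) else omap (unsh p) (P w' (nu v p x)).

Lemma recover (w' : W N) : (forall y, T' y = P w' y) -> forall x, P w x = R w' x.
Proof.
move=> hT x; rewrite /R.
case: (eqVneq x (inl u)) => [->|Hxu]; first exact: Pu hp.
case: (eqVneq x s) => [->|Hxs]; first exact: hs2.
case: (eqVneq x (inr p)) => [->|Hxp].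
  by rewrite -hT (moran_nu uv hp hs1 s_ne_p) hs2 rep_Sp.
rewrite -hT (moran_nu uv hp Hxu Hxp).
case E: (P w x) => [a|]; last by rewrite /repf.
have Hap : a != p.
  apply/eqP => Ea; rewrite Ea in E; case: (hs3 E) => Ex.
  - by rewrite Ex eqxx in Hxu.
  - by rewrite Ex eqxx in Hxs.
rewrite /repf; have -> : (Some a == Some (p : nat)) = false by apply/negbTE; apply: contra Hap => /eqP [->].
rewrite /= /unsh /sh; move/eqP: Hap => Hap.
have := P_le E; have := ltn_ord p.
by case: (ltnP a p) => ? /=; case: ifP => ? ? ?; simpl in *; congr Some; lia.
Qed.

End MoranWF.

Lemma cardE_sum (T : finType) (A : {pred T}) : #|A| = \sum_(x : T) (x \in A : nat).
Proof. by rewrite -sum1_card big_mkcond; apply: eq_bigr => x _; case: (x \in A). Qed.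

Lemma sum_const_ord k c : \sum_(i < k) c = c * k.
Proof. by rewrite big_const_ord iter_addn_0. Qed.

Section Two.
Variable m : nat.
Local Notation N := m.+2.

Lemma card_node : #|{: node N}| = 2 * m + 3.
Proof. rewrite card_sum !card_ord; lia. Qed.

Lemma two_of_ge2 (f : node N -> option 'I_m.+1) :
  (forall x, (f x == None) = (x == inr ord0)) ->
  (forall q, exists c1 c2, [/\ c1 != c2, f c1 = Some q & f c2 = Some q]) ->
  forall q, #|[pred x | f x == Some q]| == 2.
Proof.
move=> H0 H2.
pose c q := #|[pred x | f x == Some q]|.
have ge q : 2 <= c q.
  have [c1 [c2 [ne E1 E2]]] := H2 q.
  have -> : 2 = #|[set c1; c2]| by rewrite cards2 ne.
  apply: subset_leq_card; apply/subsetP => x; rewrite !inE => /orP [] /eqP ->.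
  - by rewrite /= E1.
  - by rewrite /= E2.
have tot : 2 * m + 3 = 1 + \sum_q c q.
  rewrite -card_node cardE_sum.
  rewrite (eq_bigr (fun x => (f x == None) + \sum_q (f x == Some q) : nat)); last first.
    move=> x _; case E: (f x) => [a|] /=.
    - rewrite (bigD1 a) //= eqxx big1 // => i ne; case: eqP => // -[Ea]; by rewrite Ea eqxx in ne.
    - by rewrite big1.
  rewrite big_split /= exchange_big /=; congr (_ + _).
  - rewrite (eq_bigr (fun x => (x \in pred1 (inr ord0)) : nat)); last by move=> x _; rewrite H0.
    by rewrite -cardE_sum card1.
  - by apply: eq_bigr => q _; rewrite /c cardE_sum.
move=> q; rewrite eqn_leq ge andbT leqNgt; apply/negP => Hq.
have : \sum_q c q >= 2 * m + 3.
  rewrite (bigD1 q) //=.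
  have : \sum_(i | i != q) 2 <= \sum_(i | i != q) c i by apply: leq_sum => i _; apply: ge.
  have : \sum_(i < m.+1) 2 = 2 + \sum_(i | i != q) 2 by rewrite (bigD1 q).
  have Hq2 : 2 < c q := Hq. rewrite sum_const_ord; move: Hq2. set S2 := \sum_(i | i != q) 2. set Sc := \sum_(i | i != q) c i. set cq := c q. clearbody S2 Sc cq. lia.
move: tot; set S := \sum_q c q; clearbody S; lia.
Qed.
End Two.

Section Exist.
Variable m : nat.
Local Notation N := m.+2.

Lemma sib_exists (w : W N) u (p : 'I_m.+1) : par w (inl u) = Some p ->
  exists s, [/\ s != inl u, P w s = Some (p : nat) & forall x, P w x = Some (p : nat) -> x = inl u \/ x = s].
Proof.
move=> hp; have [c1 [c2 [ne E1 E2 H]]] := P_children w p.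
case: (H _ (Pu hp)) => Hu.
- exists c2; split => //; first by rewrite Hu eq_sym.
  by move=> x /H [] ->; auto.
- exists c1; split => //; first by rewrite Hu.
  by move=> x /H [] ->; auto.
Qed.

Lemma par_leaf (w : W N) l : exists p, par w (inl l) = Some p.
Proof.
case E: (par w (inl l)) => [p|]; first by exists p.
have : P w (inl l) == None by rewrite /P E.
by rewrite P_None.
Qed.

Lemma moran_exists (w : W N) (u v : 'I_N) : u != v ->
  exists w' : W N, forall y, moran_raw w u v y = P w' y.
Proof.
move=> uv; have [p hp] := par_leaf w u.
have [s [hs1 hs2 hs3]] := sib_exists hp.
pose f := [ffun y => omap (@inord m) (moran_raw w u v y)] : {ffun node N -> option 'I_m.+1}.
have Pf y : omap val (f y) = moran_raw w u v y.
  rewrite ffunE; case E: (moran_raw w u v y) => [r|] //=.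
  by rewrite inordK // ltnS (T'_le uv hp E).
have fN x : (f x == None) = (x == inr ord0).
  rewrite -(T'_None uv hp hs1 hs3) -Pf; by case: (f x).
have wf : wf_tree f.
  apply/andP; split; [apply/andP; split|].
  - by apply/forallP => x; rewrite fN; case: x => [l|k] //=.
  - apply/forallP => a; apply/forallP => b; apply/implyP => /eqP E.
    have := congr1 (omap val) E; rewrite Pf => /= /(T'_lt uv hp hs1).
    by [].
  - apply/forallP => q.
    have := @two_of_ge2 m f fN; rewrite /=; apply.
    move=> q'; have [c1 [c2 [ne E1 E2]]] := T'_two uv hp hs1 hs2 q'.
    exists c1, c2; split => //.
    + by move: (Pf c1); rewrite E1; case: (f c1) => [a|] //= [/val_inj ->].
    + by move: (Pf c2); rewrite E2; case: (f c2) => [a|] //= [/val_inj ->].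
exists (exist _ f wf) => y; by rewrite /P /par /= Pf.
Qed.
End Exist.

Section Lineage.
Variable m : nat.
Local Notation N := m.+2.

Definition L (w : W N) (j : nat) : {set node N} :=
  [set y : node N | (if P w y is Some r then r < j else true) &&
                    (if y is inr k then j <= k else true)].

Lemma card_children (w : W N) (q : 'I_m.+1) : #|[pred x | P w x == Some (q : nat)]| = 2.
Proof.
case/andP: (wfW w) => _ /forallP /(_ q) /eqP H.
by rewrite -H; apply: eq_card => x; rewrite !inE P_Some.
Qed.

Lemma lineage_bound (w : W N) (j : 'I_m.+1) : #|L w j| <= j.+1.
Proof.
pose D := [set y : node N | if P w y is Some r then r < j else true].
pose I := [set y : node N | if y is inr k then k < j else false].
have LD : L w j \subset D :\: I.
  apply/subsetP => y; rewrite !inE => /andP [H1 H2]; rewrite H1 andbT.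
  by case: y H2 {H1} => [l|k] //=; rewrite -leqNgt.
have ID : I \subset D.
  apply/subsetP => y; rewrite !inE; case: y => [l|k] // Hk.
  by case E: (P w (inr k)) => [r|] //; have := P_lt E; simpl in *; lia.
have Hj : j <= m.+1 := ltnW (ltn_ord j).
have cI : j <= #|I|.
  have -> : (j : nat) = #|[set (inr (widen_ord Hj k) : node N) | k : 'I_j]|.
    rewrite card_imset ?card_ord //.
    by move=> a b [] E; apply: val_inj.
  apply: subset_leq_card; apply/subsetP => y /imsetP [k _ ->].
  by rewrite inE /=.
have cD : #|D| <= 1 + j * 2.
  rewrite cardE_sum.
  apply: (@leq_trans (\sum_y ((P w y == None) + \sum_(r : 'I_j) (P w y == Some (r : nat)) : nat))).
    apply: leq_sum => y _; rewrite inE; case E: (P w y) => [a|] //=.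
    case Ha: (a < j) => //; rewrite (bigD1 (Ordinal Ha)) //= eqxx; lia.
  rewrite big_split /= exchange_big /=.
  have -> : \sum_y ((P w y == None) : nat) = 1.
    rewrite (eq_bigr (fun y => (y \in pred1 (inr ord0)) : nat)); last by move=> y _; rewrite P_None.
    by rewrite -cardE_sum card1.
  rewrite (eq_bigr (fun _ => 2)) ?sum_const_ord; first by rewrite mulnC.
  move=> r _; rewrite -(card_children w (widen_ord Hj r)) cardE_sum.
  by apply: eq_bigr => y _; rewrite inE.
have := subset_leq_card LD; rewrite cardsD (setIidPr ID).
move: cI cD; clearbody D I; move: (#|L w j|) (#|D|) (#|I|) (j : nat) => a b c d; lia.
Qed.

End Lineage.

Lemma sum_card_pair (A B : finType) (S : A -> {set B}) :
  \sum_a #|S a| = #|[set x : A * B | x.2 \in S x.1]|.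
Proof.
rewrite cardE_sum; under eq_bigr do rewrite cardE_sum.
rewrite pair_big /=; apply: eq_bigr => x _; by rewrite inE.
Qed.

Section Fiber.
Variable m : nat.
Local Notation N := m.+2.

Definition sib (w : W N) (u : 'I_N) : node N :=
  odflt (inl u) [pick x | (x != inl u) && (P w x == P w (inl u))].

Lemma sibP (w : W N) u (p : 'I_m.+1) : par w (inl u) = Some p ->
  [/\ sib w u != inl u, P w (sib w u) = Some (p : nat) &
      forall x, P w x = Some (p : nat) -> x = inl u \/ x = sib w u].
Proof.
move=> hp; have [s [hs1 hs2 hs3]] := sib_exists hp.
suff -> : sib w u = s by [].
rewrite /sib; case: pickP => [x /andP [H1 /eqP H2]|H] /=.
- rewrite (Pu hp) in H2; case: (hs3 _ H2) => // E; by rewrite E eqxx in H1.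
- by have := H s; rewrite hs1 hs2 (Pu hp) eqxx.
Qed.

Lemma mpP (w w' : W N) (u v : 'I_N) :
  reflect (u != v /\ forall y, moran_raw w u v y = P w' y) ((u, v) \in moran_pairs w w').
Proof.
rewrite inE /=; apply: (iffP andP) => [[H1 /forallP H2]|[H1 H2]]; split => //.
- by move=> y; apply/eqP; apply: H2.
- by apply/forallP => y; rewrite H2.
Qed.

Definition Sj (w w' : W N) (j : 'I_m.+1) : {set 'I_N * 'I_N} :=
  [set uv in moran_pairs w w' | par w (inl uv.1) == Some j].

Lemma fiber_bound (w' : W N) (j : 'I_m.+1) : \sum_w #|Sj w w' j| <= 2 * j.+1.
Proof.
rewrite sum_card_pair.
set F := [set x | _].
pose phi (x : W N * ('I_N * 'I_N)) := (x.2.1, nu x.2.2 j (sib x.1 x.2.1)).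
have Fdef x : x \in F -> [/\ x.2.1 != x.2.2, forall y, moran_raw x.1 x.2.1 x.2.2 y = P w' y
                          & par x.1 (inl x.2.1) = Some j].
  case: x => [w1 [u1 v1]]; rewrite !inE /= => /andP [/andP [H1 /forallP H2] /eqP H3]; split => // y; apply/eqP; exact: H2.
have Hinj : {in F &, injective phi}.
  move=> [w1 [u1 v1]] [w2 [u2 v2]] /Fdef [/= uv1 hT1 J1] /Fdef [/= uv2 hT2 J2].
  rewrite /phi /= => -[Eu Es]; subst u2.
  have Ev : v1 = v2.
    have := hT1 (inl v1); rewrite (moranE uv1 J1) eqxx orbT => E1.
    have := hT2 (inl v1); rewrite (moranE uv2 J2) -E1.
    case: ifP => [/orP [] /eqP // E|_ /(rep_lt uv2)]; last by rewrite ltnn.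
    by rewrite E eqxx in uv1.
  subst v2.
  have [hs1 hs2 hs3] := sibP J1; have [hs1' hs2' hs3'] := sibP J2.
  have Es' := nu_inj (s_ne_p hs2) (s_ne_p hs2') Es.
  have Ew : w1 = w2.
    apply: P_inj => x.
    rewrite (recover uv1 J1 hs1 hs2 hs3 hT1) (recover uv2 J2 hs1' hs2' hs3' hT2).
    by rewrite Es'.
  by rewrite Ew.
have Hsub : phi @: F \subset setX [set l | P w' (inl l) == Some m] (L w' j).
  apply/subsetP => t /imsetP [[w1 [u1 v1]] /Fdef [/= uv1 hT1 J1] ->].
  have [hs1 hs2 hs3] := sibP J1.
  rewrite !inE /= -!hT1 (moranE uv1 J1) eqxx /=.
  rewrite (moran_nu uv1 J1 hs1 (s_ne_p hs2)) hs2 rep_Sp eqxx /=.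
  apply/andP; split.
    by case E: (P w1 (inr j)) => [r|] //; apply: P_lt E.
  rewrite /nu; case: (eqVneq (sib w1 u1) (inl v1)) => _ /=; first by rewrite -ltnS.
  move: (sib w1 u1) hs1 hs2 hs3 => s hs1 hs2 hs3.
  case: s hs1 hs2 hs3 => [l|k] //= hs1 hs2 hs3.
  have := P_lt hs2; have := ltn_ord k; simpl in *.
  move=> H1 H2; rewrite inordK; case: ifP => ? //; lia.
rewrite -(card_in_imset Hinj); apply: leq_trans (subset_leq_card Hsub) _.
rewrite cardsX; apply: leq_mul; last exact: lineage_bound.
have <- : #|[pred x | P w' x == Some (@ord_max m : nat)]| = 2 by apply: card_children.
rewrite -(card_imset _ (fun a b (E : (inl a : node N) = inl b) => ltac:(by case: E))).
apply: subset_leq_card; apply/subsetP => x /imsetP [l]; rewrite inE => H ->.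
by rewrite inE.
Qed.

End Fiber.

Section Count.
Variable m : nat.
Local Notation N := m.+2.

Lemma split_pairs (w : W N) (S : {set 'I_N * 'I_N}) :
  #|S| = \sum_(j : 'I_m.+1) #|[set uv in S | par w (inl uv.1) == Some j]|.
Proof.
rewrite cardE_sum (eq_bigr (fun j : 'I_m.+1 => \sum_uv ((uv \in S) && (par w (inl uv.1) == Some j)) : nat)); last first.
  by move=> j _; rewrite cardE_sum; apply: eq_bigr => uv _; rewrite inE.
rewrite exchange_big; apply: eq_bigr => uv _ /=.
have [p hp] := par_leaf w uv.1.
rewrite (bigD1 p) //= hp eqxx andbT big1 ?addn0 // => i ne.
by case: (uv \in S) => //=; apply/eqP; rewrite eqb0; apply: contra ne => /eqP [->].
Qed.

Lemma sum_pairs (w : W N) (Q : pred ('I_N * 'I_N)) :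
  \sum_(w' : W N) #|[set uv in moran_pairs w w' | Q uv]| =
  #|[set uv : 'I_N * 'I_N | (uv.1 != uv.2) && Q uv]|.
Proof.
under eq_bigr do rewrite cardE_sum.
rewrite exchange_big cardE_sum; apply: eq_bigr => -[u v] _ /=.
rewrite inE /=.
case: (eqVneq u v) => [<-|uv] /=.
  by rewrite big1 // => w' _; rewrite !inE /= eqxx.
have [w0 h0] := moran_exists w uv.
case HQ: (Q (u, v)) => /=; last by rewrite big1 // => w' _; rewrite inE HQ andbF.
rewrite (bigD1 w0) //= big1 ?addn0.
  by rewrite inE HQ andbT (introT (mpP _ _ _ _) (conj uv h0)).
move=> w' ne; rewrite inE HQ andbT; case: (mpP w w' u v) => //= -[_ h'].
suff E : w' = w0 by rewrite E eqxx in ne.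
by apply: P_inj => y; rewrite -h' h0.
Qed.

Lemma card_offdiag (Q : pred 'I_N) :
  #|[set uv : 'I_N * 'I_N | (uv.1 != uv.2) && Q uv.1]| = #|Q| * m.+1.
Proof.
set X := [set uv : 'I_N * 'I_N | _].
rewrite cardE_sum.
have -> : \sum_(x : 'I_N * 'I_N) ((x \in X) : nat) = \sum_(u : 'I_N) \sum_(v : 'I_N) (((u, v) \in X) : nat).
  by rewrite pair_bigA; apply: eq_bigr => -[a b].
rewrite cardE_sum big_distrl /=; apply: eq_bigr => u _.
under eq_bigr do rewrite inE /=.
have -> : (u \in Q) = Q u by [].
case: (Q u) => /=; last by rewrite mul0n big1 // => v _; rewrite andbF.
rewrite mul1n (eq_bigr (fun v => (v \in predC1 u) : nat)); last by move=> v _; rewrite andbT inE eq_sym.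
by rewrite -cardE_sum cardC1 card_ord.
Qed.

Lemma sum_lin k : \sum_(j < k) 2 * j.+1 = k * k.+1.
Proof. elim: k => [|k IH]; first by rewrite big_ord0. rewrite big_ord_recr /= IH; nia. Qed.

Lemma bin2_2 k : 2 * 'C(k, 2) = k * k.-1.
Proof.
rewrite -bin2_sum; elim: k => [|k IH]; first by rewrite big_geq.
rewrite big_nat_recr //= mulnDr IH; case: k {IH} => //= k; nia.
Qed.

End Count.

Lemma key m (j : 'I_m.+1) (w' : W m.+2) : \sum_(w : W m.+2) #|Sj w w' j| = 2 * j.+1.
Proof.
pose a (x : W m.+2) (i : 'I_m.+1) := \sum_(w : W m.+2) #|Sj w x i|.
pose b (i : 'I_m.+1) := 2 * i.+1.
have le x i : a x i <= b i by apply: fiber_bound.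
have tot : \sum_x \sum_i a x i = \sum_(x : W m.+2) \sum_i b i.
  rewrite /b sum_lin.
  transitivity (\sum_(x : W m.+2) \sum_(w : W m.+2) #|moran_pairs w x|).
    apply: eq_bigr => x _; rewrite /a exchange_big /=; apply: eq_bigr => w _.
    by rewrite (split_pairs w).
  rewrite exchange_big /=; apply: eq_bigr => w _.
  have E x : moran_pairs w x = [set uv in moran_pairs w x | xpredT uv].
    by apply/setP => uv; rewrite inE andbT.
  under eq_bigr do rewrite E.
  rewrite sum_pairs.
  by rewrite (card_offdiag xpredT) cardT size_enum_ord mulnC.
have H0 : \sum_x \sum_i (b i - a x i) = 0.
  rewrite (eq_bigr (fun x => \sum_i b i - \sum_i a x i)); last by move=> x _; rewrite sumnB.
  rewrite sumnB; first by rewrite tot subnn.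
  by move=> x _; apply: leq_sum => i _.
move/eqP: H0; rewrite sum_nat_eq0 => /forallP /(_ w') /=.
rewrite sum_nat_eq0 => /forallP /(_ j) /=; rewrite subn_eq0 => H.
by apply/eqP; rewrite eqn_leq le H.
Qed.

Import GRing.Theory Num.Theory.
Local Open Scope ring_scope.

Theorem proposition2 (n : nat) (hn : (2 <= n)%N) :
  (forall w w' : W n, Moran w w' = \sum_(j < n.-1) Moran_j j w w') /\
  (forall (j : 'I_n.-1) (w' : W n),
      \sum_(w : W n) Moran_j j w w' = (j.+1)%:R / ('C(n, 2))%:R) /\
  (forall (j : 'I_n.-1) (w : W n),
      \sum_(w' : W n) Moran_j j w w' = (B j w)%:R / n%:R).
Proof.
case: n hn => [|[|m]] // _.
have E2 : (m.+2 * (m.+2 - 1) = 2 * 'C(m.+2, 2))%N by rewrite bin2_2 subn1.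
have Cn0 : ('C(m.+2, 2))%:R != 0 :> rat by rewrite pnatr_eq0 -lt0n bin_gt0.
split; [|split].
- move=> w w'; rewrite /Moran /Moran_j -mulr_suml -natr_sum.
  by rewrite (split_pairs w).
- move=> j w'; rewrite /Moran_j -mulr_suml -natr_sum.
  have := key j w'; rewrite /Sj => ->.
  rewrite E2 !natrM -mulf_div divff ?mul1r //.
- move=> j w; rewrite /Moran_j -mulr_suml -natr_sum.
  rewrite (sum_pairs w (fun uv => par w (inl uv.1) == Some j)).
  rewrite (card_offdiag (fun u => par w (inl u) == Some j)) subn1 /=.
  rewrite /B !natrM -mulf_div divff ?mulr1 ?pnatr_eq0 //.
  by congr (_%:R / _); apply: eq_card => x; rewrite inE.
Qed.
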